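(* Let $\mathcal{A}$ be a class of square arrays as in the context, let $\frac12\le\alpha\le1$, and let $A\in\mathcal{M}^*_{\mathcal{A}}(\alpha)$ be an array of order $n$. If $A_{ij}$ is a singleton, then $|\Psi_{ij}(A)|>\alpha(2n-1)$, and $R_i(A)$ contains more than $(2\alpha-1)n$ symbols that appear only in row $i$ of $A$, and $C_j(A)$ contains more than $(2\alpha-1)n$ symbols that appear only in column $j$ of $A$.
   Context: An array of order $n$ is an $n\times n$ array with a symbol in each cell; an entry is a triple $(i,j,A_{ij})$. A transversal of an $m\times m$ array is a set of $m$ entries, no two agreeing in row, column, or symbol; an array is transversal-free if it has no transversal. A symbol is a singleton if it occurs exactly once in the array and a clone otherwise; $A_{ij}$ is called a singleton/clone according to the symbol in cell $(i,j)$. $R_i(A)$, $C_j(A)$ are the sets of symbols in row $i$ and column $j$; $A(i\mid j)$ is the array obtained by deleting row $i$ and column $j$; $\Psi_{ij}(A)$ is the set of symbols appearing in $A$ but not in $A(i\mid j)$. Let $\mathcal{A}$ be a class of square arrays such that (i) deleting any one row and any one column from an array in $\mathcal{A}$ gives an array in $\mathcal{A}$, and (ii) changing the symbol in one cell of an array in $\mathcal{A}$ to a new symbol appearing nowhere else in the array gives an array in $\mathcal{A}$. For $\frac12\le\alpha\le1$, $\mathcal{M}_{\mathcal{A}}(\alpha)$ is the set of transversal-free arrays in $\mathcal{A}$ whose number of distinct symbols is at least $\alpha$ times the number of cells. $\mathcal{M}^*_{\mathcal{A}}(\alpha)\subseteq\mathcal{M}_{\mathcal{A}}(\alpha)$ consists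 of those $A\in\mathcal{M}_{\mathcal{A}}(\alpha)$ such that no array in $\mathcal{M}_{\mathcal{A}}(\alpha)$ has smaller order than $A$, and no array in $\mathcal{M}_{\mathcal{A}}(\alpha)$ of the same order as $A$ has more distinct symbols than $A$. *)

(* Defs.v *)
From HB Require Import structures.
From mathcomp Require Import all_boot all_order all_algebra.
Set Implicit Arguments. Unset Strict Implicit. Unset Printing Implicit Defensive.
Import Order.TTheory GRing.Theory Num.Theory.

(* An array of order n is an n x n matrix of symbols; symbols are naturals
   (an infinite supply, so that "a new symbol" always exists). *)
Notation array n := ('M[nat]_n).

Definition array_class := forall n : nat, array n -> Prop.

Definition del_rc (m : nat) (A : array m.+1) (i j : 'I_m.+1) : array m :=
  row' i (col' j A).

Definition change_cell (n : nat) (A : array n) (i j : 'I_n) (s : nat) : array n :=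
  \matrix_(k, l) (if (k == i) && (l == j) then s else A k l).

Definition closed_del (P : array_class) : Prop :=
  forall (m : nat) (A : array m.+1) (i j : 'I_m.+1), P m.+1 A -> P m (del_rc A i j).

Definition closed_new_symbol (P : array_class) : Prop :=
  forall (n : nat) (A : array n) (i j : 'I_n) (s : nat),
    P n A ->
    (forall k l : 'I_n, (k, l) != (i, j) -> A k l != s) ->
    P n (change_cell A i j s).

Definition is_transversal (n : nat) (A : array n) (T : {set 'I_n * 'I_n}) : Prop :=
  #|T| = n /\
  {in T &, forall c d : 'I_n * 'I_n, c != d ->
     [/\ c.1 != d.1, c.2 != d.2 & A c.1 c.2 != A d.1 d.2]}.

Definition transversal_free (n : nat) (A : array n) : Prop :=
  ~ exists T : {set 'I_n * 'I_n}, is_transversal A T.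

Definition symbols (n : nat) (A : array n) : seq nat :=
  undup [seq A k l | k <- enum 'I_n, l <- enum 'I_n].

Definition nsym (n : nat) (A : array n) : nat := size (symbols A).

Definition inM (R : realFieldType) (P : array_class) (alpha : R) (n : nat) (A : array n) : Prop :=
  [/\ P n A, transversal_free A & (alpha * (n * n)%:R <= (nsym A)%:R)%R].

Definition inMstar (R : realFieldType) (P : array_class) (alpha : R) (n : nat) (A : array n) : Prop :=
  [/\ inM P alpha A,
      (forall (m : nat) (B : array m), inM P alpha B -> n <= m)
    & (forall B : array n, inM P alpha B -> nsym B <= nsym A)].

Definition singleton_cell (n : nat) (A : array n) (i j : 'I_n) : Prop :=
  #|[set c : 'I_n * 'I_n | A c.1 c.2 == A i j]| = 1.

Definition Psi (m : nat) (A : array m.+1) (i j : 'I_m.+1) : seq nat :=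
  [seq s <- symbols A | s \notin symbols (del_rc A i j)].

Definition row_syms (n : nat) (A : array n) (i : 'I_n) : seq nat :=
  undup [seq A i l | l <- enum 'I_n].
Definition col_syms (n : nat) (A : array n) (j : 'I_n) : seq nat :=
  undup [seq A k j | k <- enum 'I_n].

Definition only_in_row (n : nat) (A : array n) (i : 'I_n) : seq nat :=
  [seq s <- row_syms A i | [forall k, forall l, (A k l == s) ==> (k == i)]].
Definition only_in_col (n : nat) (A : array n) (j : 'I_n) : seq nat :=
  [seq s <- col_syms A j | [forall k, forall l, (A k l == s) ==> (l == j)]].

(* Main.v *)
Require Import Defs.
From HB Require Import structures.
From mathcomp Require Import all_boot all_order all_algebra.
From mathcomp Require Import lra.
Import Order.TTheory GRing.Theory Num.Theory.
Set Implicit Arguments. Unset Strict Implicit.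

Lemma del_rcE m (A : array m.+1) i j k l : del_rc A i j k l = A (lift i k) (lift j l).
Proof. by rewrite /del_rc !mxE. Qed.

Lemma symbolsP n (A : array n) s : reflect (exists k l, A k l = s) (s \in symbols A).
Proof.
rewrite mem_undup; apply: (iffP allpairsP).
  by move=> [[k l] [_ _ ->]]; exists k, l.
by move=> [k [l <-]]; exists (k, l); rewrite !mem_enum.
Qed.

Lemma single_eq n (A : array n) i j k l : singleton_cell A i j -> A k l = A i j -> k = i /\ l = j.
Proof.
move=> /eqP /cards1P [x Hx] E.
have h1 : (k, l) \in [set c : 'I_n * 'I_n | A c.1 c.2 == A i j] by rewrite inE /= E.
have h2 : (i, j) \in [set c : 'I_n * 'I_n | A c.1 c.2 == A i j] by rewrite inE.
move: h1 h2; rewrite Hx !in_set1 => /eqP E1 /eqP E2.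
by move: E1; rewrite -E2 => -[-> ->].
Qed.

Lemma lift_tf m (A : array m.+1) i j : singleton_cell A i j ->
  transversal_free A -> transversal_free (del_rc A i j).
Proof.
move=> Hs HA [T [HcT HT]]; apply: HA.
pose f := fun c : 'I_m * 'I_m => (lift i c.1, lift j c.2).
have finj : injective f.
  move=> [a b] [c d]; rewrite /f /= => -[e1 e2].
  have ea : a = c by apply/val_inj; rewrite /= -(bumpK i a) e1 bumpK.
  have eb : b = d by apply/val_inj; rewrite /= -(bumpK j b) e2 bumpK.
  by rewrite ea eb.
have nin : (i, j) \notin f @: T.
  apply/imsetP => -[c _ [e _]]; by move: (neq_lift i c.1); rewrite -e eqxx.
exists ((i, j) |: (f @: T)); split.
  by rewrite cardsU1 nin card_imset // HcT.
move=> c d; rewrite !in_setU1.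
move=> /orP[/eqP-> | /imsetP[c' c'T ->]] /orP[/eqP-> | /imsetP[d' d'T ->]].
- by rewrite eqxx.
- move=> _; split => /=; [exact: neq_lift | exact: neq_lift |].
  by apply/eqP => E; have [] := single_eq Hs (esym E); move=> /eqP; rewrite eq_sym (negbTE (neq_lift _ _)).
- move=> _; split => /=; [rewrite eq_sym; exact: neq_lift | rewrite eq_sym; exact: neq_lift |].
  by apply/eqP => E; have [] := single_eq Hs E; move=> /eqP; rewrite eq_sym (negbTE (neq_lift _ _)).
- move=> ne; have ne' : c' != d' by apply: contraNneq ne => ->.
  case: (HT c' d' c'T d'T ne') => h1 h2 h3; split => /=.
  + by rewrite (inj_eq (@lift_inj _ i)).
  + by rewrite (inj_eq (@lift_inj _ j)).
  + by rewrite -!del_rcE.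
Qed.

Lemma occ m (A : array m.+1) i j k l : A k l \notin symbols (del_rc A i j) -> k = i \/ l = j.
Proof.
move=> H; case: (eqVneq k i) => [->|ki]; [by left|].
case: (eqVneq l j) => [->|lj]; [by right|].
exfalso; move: ki lj; rewrite eq_sym => /unlift_some [k' hk _].
rewrite eq_sym => /unlift_some [l' hl _].
by move/negP: H; apply; apply/symbolsP; exists k', l'; rewrite del_rcE hk hl.
Qed.

Lemma nsym_bound m (A : array m.+1) i j : (nsym A <= nsym (del_rc A i j) + size (Psi A i j))%N.
Proof.
rewrite /nsym /Psi.
rewrite -(count_predC (fun s => s \in symbols (del_rc A i j)) (symbols A)) size_filter.
apply: leq_add; last exact: leqnn.
rewrite -size_filter.
apply: uniq_leq_size; first exact: filter_uniq (undup_uniq _).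
by move=> x; rewrite mem_filter => /andP[].
Qed.

Lemma row_bound m (A : array m.+1) i j :
  (size (Psi A i j) <= size (only_in_row A i) + m)%N.
Proof.
rewrite -[X in (_ <= X)%N](_ : size (only_in_row A i ++ [seq A (lift i k) j | k <- enum 'I_m]) = _);
  last by rewrite size_cat size_map size_enum_ord.
 apply: uniq_leq_size; first exact: filter_uniq (undup_uniq _).
move=> s; rewrite mem_filter mem_cat => /andP[Hn /symbolsP [k [l Ekl]]].
case: (boolP [forall k, forall l, (A k l == s) ==> (k == i)]) => Hf.
  apply/orP; left; rewrite mem_filter Hf /= mem_undup.
  have := forallP Hf k => /forallP /(_ l); rewrite Ekl eqxx /= => /eqP ki.
  by apply/mapP; exists l; rewrite ?mem_enum // -ki.
apply/orP; right.
move/forallPn: Hf => [k2 /forallPn [l2]]; rewrite negb_imply => /andP[/eqP E2 ki].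
have Hn2 : A k2 l2 \notin symbols (del_rc A i j) by rewrite E2.
case: (occ Hn2) => [ki'|lj]; first by rewrite ki' eqxx in ki.
move: ki; rewrite eq_sym => /unlift_some [k' hk _].
by apply/mapP; exists k'; rewrite ?mem_enum // -hk -lj E2.
Qed.

Lemma col_bound m (A : array m.+1) i j :
  (size (Psi A i j) <= size (only_in_col A j) + m)%N.
Proof.
rewrite -[X in (_ <= X)%N](_ : size (only_in_col A j ++ [seq A i (lift j k) | k <- enum 'I_m]) = _);
  last by rewrite size_cat size_map size_enum_ord.
 apply: uniq_leq_size; first exact: filter_uniq (undup_uniq _).
move=> s; rewrite mem_filter mem_cat => /andP[Hn /symbolsP [k [l Ekl]]].
case: (boolP [forall k, forall l, (A k l == s) ==> (l == j)]) => Hf.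
  apply/orP; left; rewrite mem_filter Hf /= mem_undup.
  have := forallP Hf k => /forallP /(_ l); rewrite Ekl eqxx /= => /eqP lj.
  by apply/mapP; exists k; rewrite ?mem_enum // -lj.
apply/orP; right.
move/forallPn: Hf => [k2 /forallPn [l2]]; rewrite negb_imply => /andP[/eqP E2 lj].
have Hn2 : A k2 l2 \notin symbols (del_rc A i j) by rewrite E2.
case: (occ Hn2) => [ki|lj']; last by rewrite lj' eqxx in lj.
move: lj; rewrite eq_sym => /unlift_some [l' hl _].
by apply/mapP; exists l'; rewrite ?mem_enum // -hl -ki E2.
Qed.

Local Open Scope ring_scope.

Theorem mainTheorem5 (R : realFieldType) (P : array_class)
  (HPdel : closed_del P) (HPnew : closed_new_symbol P)
  (alpha : R) (Ha1 : 1 / 2%:R <= alpha) (Ha2 : alpha <= 1)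
  (n : nat) (A : array n.+1) (HA : inMstar P alpha A)
  (i j : 'I_n.+1) (Hs : singleton_cell A i j) :
  [/\ alpha * (2 * n.+1 - 1)%N%:R < (size (Psi A i j))%:R,
      (2%:R * alpha - 1) * n.+1%:R < (size (only_in_row A i))%:R
    & (2%:R * alpha - 1) * n.+1%:R < (size (only_in_col A j))%:R].
Proof.
case: HA => [[HPA HtfA HnA] Hmin _].
set B := del_rc A i j.
have HnB : ~~ (alpha * (n * n)%:R <= (nsym B)%:R).
  apply/negP => H.
  have := Hmin n B (And3 (HPdel _ _ _ _ HPA) (lift_tf Hs HtfA) H).
  by rewrite ltnn.
rewrite -ltNge in HnB.
have Hb := nsym_bound A i j.
have Hb' : (nsym A)%:R <= (nsym B)%:R + (size (Psi A i j))%:R :> R.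
  by rewrite -natrD ler_nat.
have Hr : (size (Psi A i j))%:R <= (size (only_in_row A i))%:R + n%:R :> R.
  by rewrite -natrD ler_nat row_bound.
have Hc : (size (Psi A i j))%:R <= (size (only_in_col A j))%:R + n%:R :> R.
  by rewrite -natrD ler_nat col_bound.
have E1 : (2 * n.+1 - 1)%N = (2 * n + 1)%N.
  by rewrite mulnS addSn subSS subn0 addnC.
rewrite E1.
move: HnA HnB Hb' Hr Hc.
rewrite !natrD !natrM -!natr1 addr0.
set x := n%:R; set p := (size (Psi A i j))%:R.
move=> h1 h2 h3 h4 h5.
have H1 : alpha * (x + x + 1) < p by nra.
split; nra.
Qed.
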